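(* Let $y$ be a point of the upper half-plane $\mathfrak h_1$ such that $\tau(y)=\gamma y$ for some $\gamma\in\Gamma(2)$, where $\tau(y)=-\overline y$. Then there exist $\beta\in SL(2,\mathbb Z)$ and $Y>0$ such that $y=\beta\cdot iY$.
   Context: $SL(2,\mathbb R)$ acts on $\mathfrak h_1=\{z\in\mathbb C:\mathrm{Im}z>0\}$ by fractional linear transformations. $\Gamma(2)=\{\gamma\in SL(2,\mathbb Z):\gamma\equiv I\bmod2\}$. *)

(* Defs.v *)
From mathcomp Require Import all_boot all_order all_algebra.
From mathcomp Require Import reals complex.
Set Implicit Arguments. Unset Strict Implicit. Unset Printing Implicit Defensive.
Import Order.TTheory GRing.Theory Num.Theory.
Local Open Scope ring_scope.
Local Open Scope complex_scope.

Definition in_h1 (R : realType) (z : R[i]) : Prop := 0 < complex.Im z.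

Definition inSL2Z (g : 'M[int]_2) : Prop := \det g = 1.

Definition inGamma2 (g : 'M[int]_2) : Prop :=
  inSL2Z g /\ forall i j : 'I_2, (2 %| g i j - (i == j)%:Z)%Z.

Definition mob (R : realType) (g : 'M[int]_2) (z : R[i]) : R[i] :=
  ((g 0 0)%:~R * z + (g 0 1)%:~R) / ((g 1 0)%:~R * z + (g 1 1)%:~R).

Definition tau (R : realType) (z : R[i]) : R[i] := - z^*.

(* Main.v *)
Require Import Defs.
From mathcomp Require Import all_boot all_order all_algebra.
From mathcomp Require Import reals complex.
From mathcomp Require Import ring lra.
Import Order.TTheory GRing.Theory Num.Theory.
Local Open Scope ring_scope.
Local Open Scope complex_scope.

Lemma cmulE (R : realType) (a b c d : R) : (a +i* b) * (c +i* d) = (a*c - b*d) +i* (a*d + b*c).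
Proof. by []. Qed.
Lemma caddE (R : realType) (a b c d : R) : (a +i* b) + (c +i* d) = (a+c) +i* (b+d).
Proof. by []. Qed.
Lemma coppE (R : realType) (a b : R) : - (a +i* b) = (- a) +i* (- b).
Proof. by []. Qed.
Lemma cintE (R : realType) (k : int) : (k%:~R : R[i]) = (k%:~R : R) +i* 0.
Proof. by rewrite -(rmorph_int (real_complex R)). Qed.
Lemma cconjE (R : realType) (a b : R) : Num.conj (a +i* b) = a +i* (- b).
Proof. by []. Qed.
Lemma det22 (A : 'M[int]_2) : \det A = A 0 0 * A 1 1 - A 0 1 * A 1 0.
Proof.
rewrite (expand_det_row _ 0) !big_ord_recl big_ord0 /cofactor !det_mx11 !mxE /=.
have -> : lift 0 (0 : 'I_1) = 1 by apply/val_inj.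
have -> : lift (1 : 'I_2) (0 : 'I_1) = 0 by apply/val_inj.
rewrite /bump /= expr0 expr1 addr0 mul1r mulN1r mulrN. done.
Qed.
Lemma four (a b c d : int) : a*b = c*d ->
  exists x y z w, [/\ a = x*y, b = z*w, c = x*z & d = y*w].
Proof.
move=> H.
have [a0|a0] := eqVneq a 0.
  have : c * d == 0 by rewrite -H a0 mul0r.
  rewrite mulf_eq0 => /orP[/eqP c0|/eqP d0].
    by exists 0, d, b, 1; rewrite a0 c0 !mul0r !mulr1.
  by exists c, 0, 1, b; rewrite a0 d0 !mulr0 !mul0r mul1r mulr1.
set x := gcdz a c.
have x0 : x != 0 by rewrite gcdz_eq0 negb_and a0.
have [u [v Huv]] := Bezoutz a c.
set y := (a %/ x)%Z; set z := (c %/ x)%Z.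
have ha : a = y * x by rewrite divzK // dvdz_gcdl.
have hc : c = z * x by rewrite divzK // dvdz_gcdr.
have y0 : y != 0 by apply: contra_neq a0 => y0; rewrite ha y0 mul0r.
have e1 : u * y + v * z = 1.
  apply: (mulIf x0); rewrite mul1r.
  have -> : (u * y + v * z) * x = u * a + v * c by rewrite [a]ha [c]hc; ring.
  exact: Huv.
have e2 : y * b = z * d.
  apply: (mulIf x0); rewrite -[y * b * x]mulrAC -[z * d * x]mulrAC -ha -hc; exact H.
exists x, y, z, (u * d + v * b).
have e3 : d = y * (u * d + v * b).
  have -> : y*(u*d+v*b) = u*y*d + v*(y*b) by ring.
  by rewrite e2 mulrA -mulrDl e1 mul1r.
split.
- by rewrite mulrC.
- apply: (mulfI y0); by rewrite e2 {1}e3 mulrCA.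
- by rewrite mulrC.
- exact: e3.
Qed.
Lemma main_real (R : realType) (x v P G Rr H : R) : 0 < v -> P*G - Rr*H = 1 ->
  G*H*(x^+2+v^+2) - (P*G+Rr*H)*x + P*Rr = 0 ->
  exists Y, 0 < Y /\ x +i* v = (P%:C * ('i * Y%:C) + Rr%:C) / (H%:C * ('i*Y%:C) + G%:C).
Proof.
move=> hv det circ.
set Q := (P - H*x)^+2 + (H*v)^+2.
have hQ : 0 < Q.
  have [H0|H0] := eqVneq H 0.
    have P0 : P != 0 by apply: contra_eq_neq det => ->; by rewrite H0 mul0r mulr0 subr0 eq_sym oner_eq0.
    rewrite /Q H0 !mul0r subr0 expr0n /= addr0 exprn_even_gt0 //= P0.
  have h1 := sqr_ge0 (P - H * x).
  have h2 : 0 < (H * v) ^+ 2 by rewrite exprn_even_gt0 //= mulf_neq0 // gt_eqF.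
  rewrite /Q; lra.
exists (v / Q); split; first exact: divr_gt0.
set y := x +i* v.
set D := (P - H*x) +i* (-(H*v)).
set Dc := (P - H*x) +i* (H*v).
set N := (G*x - Rr) +i* (G*v).
have Q0 : Q != 0 by rewrite gt_eqF.
have D0 : D != 0.
  apply: contra_neq Q0; rewrite /D /Q => -[-> e].
  by rewrite expr0n /= add0r -sqrrN e expr0n.
have Dc0 : Dc != 0.
  apply: contra_neq Q0; rewrite /Dc /Q => -[-> e].
  by rewrite expr0n /= add0r e expr0n.
have hN : N * Dc = 0 +i* v.
  rewrite /N /Dc cmulE; congr Complex.
    by rewrite -[RHS]oppr0 -circ; ring.
  by rewrite -[RHS]mul1r -det; ring.
have hD : D * Dc = Q%:C.
  rewrite /D /Dc cmulE; congr Complex; rewrite /Q; ring.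
have hw : 'i * (v / Q)%:C = N / D.
  have -> : N / D = (N * Dc) / (D * Dc) by field; apply/andP.
  rewrite hN hD; apply: (canRL (mulfK _)); first by rewrite eq_complex /= negb_and Q0.
  rewrite !cmulE; congr Complex; rewrite /=; last field; try done; ring.
rewrite hw.
have eN : N = G%:C * y - Rr%:C by rewrite /N /y cmulE coppE caddE; congr Complex; ring.
have eD : D = P%:C - H%:C * y by rewrite /D /y cmulE coppE caddE; congr Complex; ring.
have detC : P%:C * G%:C - Rr%:C * H%:C = 1 :> R[i] by rewrite -!rmorphM -rmorphB det.
rewrite eN; rewrite eD in D0 *.
set z := (G%:C*y - Rr%:C)/(P%:C - H%:C*y).
have e1 : P%:C*z + Rr%:C = ((P%:C*G%:C - Rr%:C*H%:C)*y)/(P%:C - H%:C*y) by rewrite /z; field.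
have e2 : H%:C*z + G%:C = (P%:C*G%:C - Rr%:C*H%:C)/(P%:C - H%:C*y) by rewrite /z; field.
rewrite e1 e2 detC mul1r; field; exact: D0.
Qed.
Theorem lemma5p3 (R : realType) (y : R[i]) (gamma : 'M[int]_2) :
  in_h1 y -> inGamma2 gamma -> tau y = mob gamma y ->
  exists (beta : 'M[int]_2) (Y : R),
    inSL2Z beta /\ 0 < Y /\ y = mob beta ('i * Y%:C).
Proof.
move=> hy [detg par] H.
have dg := detg; rewrite /inSL2Z det22 in dg.
have pb := par 0 1; have pc := par 1 0; have pa := par 0 0.
rewrite /= subr0 in pb pc.
rewrite /mob in H.
move: dg pa pb pc H.
set a := gamma 0 0; set b := gamma 0 1; set c := gamma 1 0; set d := gamma 1 1.
move=> dg pa pb pc H.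
case: y hy H => x v; rewrite /in_h1 /= => hv H.
have den0 : (c%:~R * (x +i* v) + d%:~R : R[i]) != 0.
  rewrite !cintE cmulE caddE eq_complex /=; apply/negP => /andP[/eqP e1 /eqP e2].
  move: e2; rewrite mul0r !addr0 => /eqP; rewrite mulf_eq0 (gt_eqF hv) orbF intr_eq0 => /eqP c0.
  move: e1; rewrite c0 !mul0r !subr0 !add0r => /eqP; rewrite intr_eq0 => /eqP d0.
  by move: dg; rewrite c0 d0 !mulr0 subrr.
have H2 : tau (x +i* v) * (c%:~R * (x +i* v) + d%:~R) = a%:~R * (x +i* v) + b%:~R by rewrite H divfK.
move: H2; rewrite /tau !cintE cconjE coppE !cmulE !caddE => -[Hre Him].
rewrite /= subr0 in pc; rewrite /= in pa.
have ad : d = a.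
  have e : v * (d%:~R - a%:~R) = 0 :> R by nra.
  by move/eqP: e; rewrite mulf_eq0 (gt_eqF hv) /= subr_eq0 eqr_int => /eqP.
case/dvdzP: pa => k hk; case/dvdzP: pb => b' hb; case/dvdzP: pc => c' hc.
have ha : a = k * 2 + 1 by rewrite -hk subrK.
have key : (-k) * (-(k+1)) = b' * c'.
  have e : 4 * ((-k) * (-(k+1)) - b' * c') = a * d - b * c - 1 by rewrite ad ha hb hc; ring.
  by move/eqP: e; rewrite dg subrr mulf_eq0 /= subr_eq0 => /eqP.
have [p [g [r [h [e1 e2 e3 e4]]]]] := @four _ _ _ _ key.
have detI : p * g - r * h = 1 by rewrite -e1 -e2; ring.
have eaI : a = - (p * g + r * h) by rewrite ha -e1 -e2; ring.
have ebI : b = 2 * (p * r) by rewrite hb e3; ring.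
have ecI : c = 2 * (g * h) by rewrite hc e4; ring.
rewrite ad eaI ebI ecI !(intrN, intrD, intrM) in Hre.
have detR : (p%:~R : R) * g%:~R - r%:~R * h%:~R = 1 by rewrite -!intrM -intrB detI.
have circ : (g%:~R : R) * h%:~R * (x ^+ 2 + v ^+ 2) - (p%:~R * g%:~R + r%:~R * h%:~R) * x + p%:~R * r%:~R = 0.
  nra.
have [Y [hY hyY]] := @main_real R x v _ _ _ _ hv detR circ.
exists (\matrix_(i < 2, j < 2) (if i == 0 then (if j == 0 then p else r) else (if j == 0 then h else g))).
exists Y; split; first by rewrite /inSL2Z det22 !mxE /=.
split; first exact: hY.
rewrite /mob !mxE /= !cintE; exact: hyY.
Qed.
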